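(* Let $B$ be a complementary basis, $\beta=A_{\cdot B}^{-1}$ with rows $\beta_k$ indexed by $k\in B$, $i\in B$, $Q\in\mathbb R^{n\times d}$ and $q\in\mathbb R^n$. Let $$F(i)=\Big\{y\in\mathbb R^B:\ Q^T\beta^Ty=0,\ \sum_{j\in B\setminus\{i\}}y_j=1,\ y_j\ge0\ \forall j\in B\setminus\{i\}\Big\}$$ ($y_i$ free), and assume $F(i)\neq\emptyset$ and $\beta_iQ\neq0$. For $\epsilon>0$ let $$t^*(\epsilon)=\max\{t:\ (t,\theta)\in\mathbb R\times\mathbb R^d,\ -\beta_jQ\theta+t\le\beta_j(q+\boldsymbol\epsilon)\ \forall j\in B\setminus\{i\},\ -\beta_iQ\theta=\beta_i(q+\boldsymbol\epsilon)\},$$ and let $T^*$ be the lexicographic minimum of the set $\{(\beta[\,q\;\;I\,])^Ty:\ y\in F(i)\}\subseteq\mathbb R^{n+1}$ (which exists under these hypotheses). Then there exists $\delta>0$ with $t^*(\epsilon)>0$ for all $\epsilon\in(0,\delta)$ if and only if $T^*\succ0$.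
   Context: Let $M\in\mathbb R^{n\times n}$ and $A=[\,I\;\;-M\,]\in\mathbb R^{n\times 2n}$, columns indexed by $\{1,\dots,2n\}$; $A_{\cdot J}$ is the submatrix of columns indexed by $J$. Complementary index: $\bar i=i+n$ if $i\le n$, $\bar i=i-n$ if $i>n$. A complementary basis is a set $B$ with $|B|=n$, $A_{\cdot B}$ invertible, and $i\in B\Rightarrow\bar i\notin B$. $\boldsymbol\epsilon=(\epsilon,\epsilon^2,\dots,\epsilon^n)^T$; $[\,q\;\;I\,]$ is the $n\times(n+1)$ matrix with first column $q$ followed by the identity. A vector $a$ is lexico-positive ($a\succ0$) if $a\ne0$ and its first nonzero component is positive; $x\succ y$ iff $x-y\succ0$; the lexicographic minimum of a set $\{s^k\}$ is the element $s^j$ with $s^k\succeq s^j$ for all $k$. *)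

(* Defs.v *)
From HB Require Import structures.
From mathcomp Require Import all_boot all_order all_algebra.
Set Implicit Arguments. Unset Strict Implicit. Unset Printing Implicit Defensive.
Import Order.TTheory GRing.Theory Num.Theory.
Local Open Scope ring_scope.

Section Defs.
Variable R : realFieldType.

(* A = [ I  -M ] : n x 2n, columns indexed by 'I_(n + n):
   lshift n j  <-> column j+1 (j < n),  rshift n j <-> column n+j+1. *)
Definition Amat n (M : 'M[R]_n) : 'M[R]_(n, n + n) := row_mx 1%:M (- M).

(* complementary index: bar i = i + n if i <= n, i - n otherwise *)
Definition compl_idx n (k : 'I_(n + n)) : 'I_(n + n) :=
  match split k with
  | inl j => rshift n j
  | inr j => lshift n j
  end.

(* A complementary basis B, given by an enumeration b : 'I_n -> 'I_(n+n) of its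
   elements (so |B| = n iff b injective); A_{.B} = colsub b (Amat M). *)
Definition compl_basis n (M : 'M[R]_n) (b : 'I_n -> 'I_(n + n)) : Prop :=
  injective b /\ colsub b (Amat M) \in unitmx /\
  (forall p p' : 'I_n, b p' <> compl_idx (b p)).

(* beta = A_{.B}^{-1}; row p of beta is beta_{b p} *)
Definition betaB n (M : 'M[R]_n) (b : 'I_n -> 'I_(n + n)) : 'M[R]_n :=
  invmx (colsub b (Amat M)).

Definition epsvec n (e : R) : 'cV[R]_n := \col_(k < n) e ^+ k.+1.

Definition lexpos m (a : 'cV[R]_m) : Prop :=
  a != 0 /\
  (forall k : 'I_m, a k ord0 != 0 ->
     (forall j : 'I_m, (j < k)%N -> a j ord0 = 0) -> 0 < a k ord0).

Definition lexge m (x y : 'cV[R]_m) : Prop := x = y \/ lexpos (x - y).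

Definition is_lexmin m (S : 'cV[R]_m -> Prop) (s : 'cV[R]_m) : Prop :=
  S s /\ forall s', S s' -> lexge s' s.

Definition is_max (S : R -> Prop) (t : R) : Prop :=
  S t /\ forall s, S s -> s <= t.

(* F(i) : y in R^B (indexed by positions of B) *)
Definition Fset n d (beta : 'M[R]_n) (Q : 'M[R]_(n, d)) (i : 'I_n)
  (y : 'cV[R]_n) : Prop :=
  Q^T *m beta^T *m y = 0 /\
  \sum_(j < n | j != i) y j ord0 = 1 /\
  (forall j : 'I_n, j != i -> 0 <= y j ord0).

Definition tfeas n d (beta : 'M[R]_n) (Q : 'M[R]_(n, d)) (q : 'cV[R]_n)
  (i : 'I_n) (e : R) (t : R) : Prop :=
  exists theta : 'cV[R]_d,
    (forall j : 'I_n, j != i ->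
       - (row j beta *m Q *m theta) ord0 ord0 + t
         <= (row j beta *m (q + epsvec n e)) ord0 ord0) /\
    - (row i beta *m Q *m theta) ord0 ord0
      = (row i beta *m (q + epsvec n e)) ord0 ord0.

Definition Tset n d (beta : 'M[R]_n) (Q : 'M[R]_(n, d)) (q : 'cV[R]_n)
  (i : 'I_n) (v : 'cV[R]_(1 + n)) : Prop :=
  exists y, Fset beta Q i y /\ v = (beta *m row_mx q 1%:M)^T *m y.

End Defs.

(* Main.v *)
Require Import Defs.
From HB Require Import structures.
From mathcomp Require Import all_boot all_order all_algebra.
From Stdlib Require Import Classical.
Import Order.TTheory GRing.Theory Num.Theory.
Local Open Scope ring_scope.

Module Aux.
Set Implicit Arguments. Unset Strict Implicit. Unset Printing Implicit Defensive.

Section Farkas.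
Variable R : realFieldType.

Lemma fin_argmin (I : finType) (P : pred I) (F : I -> R) :
  (exists i, P i) -> exists i, P i /\ forall j, P j -> F i <= F j.
Proof.
case=> i0 Pi0; case: (arg_minP F Pi0) => k Pk H; exists k; split=> //.
Qed.

Lemma fin_argmax (I : finType) (P : pred I) (F : I -> R) :
  (exists i, P i) -> exists i, P i /\ forall j, P j -> F j <= F i.
Proof.
case=> i0 Pi0; case: (arg_maxP F Pi0) => k Pk H; exists k; split=> //.
Qed.

Lemma interp (I : finType) (P1 P2 : pred I) (L U : I -> R) :
  (forall q p, P1 q -> P2 p -> L q <= U p) ->
  exists z, (forall q, P1 q -> L q <= z) /\ (forall p, P2 p -> z <= U p).
Proof.
move=> H.
case: (boolP [exists q, P1 q]) => [/existsP e1|].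
  have [q [Pq Hq]] := fin_argmax L e1.
  by exists (L q); split=> [q' /Hq|p /(H _ _ Pq)].
move/existsPn=> n1.
case: (boolP [exists p, P2 p]) => [/existsP e2|].
  have [p [Pp Hp]] := fin_argmin U e2.
  exists (U p); split=> [q' Pq|p' /Hp //]; by move: (n1 q'); rewrite Pq.
move/existsPn=> n2; exists 0; split=> [q Pq|p Pp].
  by move: (n1 q); rewrite Pq.
by move: (n2 p); rewrite Pp.
Qed.

Definition feasF N (I : finType) (a : I -> nat -> R) (b : I -> R) (x : nat -> R) :=
  forall k, \sum_(j < N) a k j * x j <= b k.

Definition farkas_concl N (I : finType) (a : I -> nat -> R) (b : I -> R) :=
  exists l : I -> R, (forall k, 0 <= l k) /\
    (forall j, (j < N)%N -> \sum_k l k * a k j = 0) /\ \sum_k l k * b k < 0.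

Section Step.
Variables (N : nat) (I : finType) (a : I -> nat -> R) (b : I -> R).
Definition cnd (p q : I) := (0 < a p N) && (a q N < 0).
Definition comb (f : I -> R) (k' : (I + (I * I))%type) : R :=
  match k' with
  | inl k => if a k N == 0 then f k else 0
  | inr pq => if cnd pq.1 pq.2 then (- a pq.2 N) * f pq.1 + a pq.1 N * f pq.2 else 0
  end.

Lemma comb_id (l' : (I + (I * I))%type -> R) (f : I -> R) :
  \sum_k ((if a k N == 0 then l' (inl k) else 0)
          + \sum_q (if cnd k q then l' (inr (k, q)) * (- a q N) else 0)
          + \sum_p (if cnd p k then l' (inr (p, k)) * a p N else 0)) * f k
  = \sum_k' l' k' * comb f k'.
Proof.
rewrite big_sumType /=.
have -> : \sum_(pq : I * I) l' (inr pq) * comb f (inr pq) =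
  \sum_p \sum_q ((if cnd p q then l' (inr (p, q)) * (- a q N) else 0) * f p
               + (if cnd p q then l' (inr (p, q)) * a p N else 0) * f q).
  rewrite pair_big /=; apply: eq_bigr => -[p q] _ /=.
  by case: ifP => _; rewrite ?mulr0 ?mul0r ?addr0 // mulrDr !mulrA.
rewrite [X in _ = _ + X](eq_bigr _ (fun p _ => big_split _ _ _ _ _)) /= big_split /=.
idtac.
rewrite [X in _ = _ + (_ + X)]exchange_big /=.
under eq_bigr do rewrite !mulrDl.
rewrite !big_split /= -!addrA; congr (_ + _).
  by apply: eq_bigr => k _; case: ifP; rewrite ?mul0r ?mulr0.
by congr (_ + _); apply: eq_bigr => k _; rewrite mulr_suml.
Qed.
End Step.

Lemma farkas N (I : finType) (a : I -> nat -> R) (b : I -> R) :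
  ~ (exists x, feasF N a b x) -> farkas_concl N a b.
Proof.
elim: N I a b => [|N IH] I a b Hnf.
  have [k bk] : exists k, b k < 0.
    apply: NNPP => Hn; apply: Hnf; exists (fun _ => 0) => k.
    rewrite big_ord0; case: (lerP 0 (b k)) => // bk.
    by exfalso; apply: Hn; exists k.
  exists (fun k' => (k' == k)%:R); split; first by move=> k'; rewrite ler0n.
  split=> [j //|].
  rewrite (bigD1 k) //= eqxx mul1r big1 ?addr0 // => k' /negbTE ->.
  by rewrite mul0r.
pose a' k' j := @comb N I a (fun k => a k j) k'.
pose b' := @comb N I a b.
case: (classic (exists x, feasF N a' b' x)) => [[x' Hx'] | Hn].
  exfalso; apply: Hnf.
  pose r k := b k - \sum_(j < N) a k j * x' j.
  have Hr0 k : a k N = 0 -> 0 <= r k.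
    move=> ak; move: (Hx' (inl k)); rewrite /a' /b' /= ak eqxx.
    by rewrite subr_ge0.
  have Hpair p q : cnd N a p q -> 0 <= (- a q N) * r p + a p N * r q.
    move=> c; move: (Hx' (inr (p, q))); rewrite /a' /b' /= c.
    under eq_bigr do rewrite mulrDl.
    rewrite big_split /=.
    under eq_bigr do rewrite -mulrA.
    under [X in _ + X <= _]eq_bigr do rewrite -mulrA.
    rewrite -!mulr_sumr => H.
    rewrite /r !mulrBr addrACA -opprD subr_ge0.
    exact: H.
  have Hint : forall q p, a q N < 0 -> 0 < a p N -> r q / a q N <= r p / a p N.
    move=> q p /= aq ap; rewrite ler_ndivrMr // mulrAC ler_pdivrMr //.
    have := Hpair p q; rewrite /cnd ap aq => /(_ isT) H.
    have E : r q * a p N - r p * a q N = - a q N * r p + a p N * r q.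
      by rewrite mulNr addrC [r q * _]mulrC [r p * _]mulrC.
    by rewrite -subr_ge0 E.
  have [z [Hz1 Hz2]] := @interp I (fun q => a q N < 0) (fun p => 0 < a p N)
     (fun q => r q / a q N) (fun p => r p / a p N) Hint.
  exists (fun j => if j == N then z else x' j) => k.
  rewrite big_ord_recr /= eqxx.
  rewrite (eq_bigr (fun j : 'I_N => a k j * x' j)); last first.
    by move=> j _; rewrite /= ltn_eqF.
  rewrite -lerBrDl -/(r k).
  case: (ltrgtP (a k N) 0) => ak.
  - by move: (Hz1 k ak); rewrite /= ler_ndivrMr // mulrC.
  - by move: (Hz2 k ak); rewrite /= ler_pdivlMr // mulrC.
  - by rewrite ak mul0r; apply: Hr0.
have [l' [l'0 [l'a l'b]]] := IH _ a' b' Hn.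
exists (fun k => (if a k N == 0 then l' (inl k) else 0)
          + \sum_q (if cnd N a k q then l' (inr (k, q)) * (- a q N) else 0)
          + \sum_p (if cnd N a p k then l' (inr (p, k)) * a p N else 0)).
split; last split.
- move=> k; rewrite !addr_ge0 //.
  + by case: ifP.
  + apply: sumr_ge0 => q _; case: ifP => // /andP[_ aq].
    by rewrite mulr_ge0 // oppr_ge0 ltW.
  + apply: sumr_ge0 => p _; case: ifP => // /andP[ap _].
    by rewrite mulr_ge0 // ltW.
- move=> j; rewrite ltnS leq_eqVlt => /orP[/eqP ->|jN].
    rewrite (@comb_id N I a l' (fun k => a k N)) big1 // => k' _.
    case: k' => [k|[p q]] /=.
      by case: ifP => [/eqP ->|]; rewrite mulr0.
    by case: ifP; rewrite ?mulr0 // mulNr [a p N * _]mulrC addNr mulr0.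
  by rewrite (@comb_id N I a l' (fun k => a k j)); apply: l'a.
- by rewrite (@comb_id N I a l' b).
Qed.
End Farkas.

Section Lex.
Variable R : realFieldType.
Variable m : nat.
Implicit Types u v : 'cV[R]_m.

Lemma first_nz v : v != 0 -> exists k : 'I_m, v k ord0 != 0 /\
   forall j : 'I_m, (j < k)%N -> v j ord0 = 0.
Proof.
move=> vn.
have [k0 Hk0] : exists k, v k ord0 != 0.
  apply: NNPP => H; move/negP: vn; apply; apply/eqP/matrixP => k j.
  rewrite ord1 mxE; apply: NNPP => H'; apply: H; exists k; exact/eqP.
case: (@arg_minnP _ k0 (fun k => v k ord0 != 0) (fun k : 'I_m => val k) Hk0) => k Hk Hmin.
exists k; split=> // j jk; apply/eqP; apply: NNPP => /negP Hj.
by have := Hmin j Hj; rewrite leqNgt jk.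
Qed.

Lemma lexposP v : lexpos v <-> exists k : 'I_m, 0 < v k ord0 /\
   forall j : 'I_m, (j < k)%N -> v j ord0 = 0.
Proof.
split.
  case=> vn H; have [k [Hk Hj]] := first_nz vn.
  by exists k; split=> //; apply: H.
case=> k [Hk Hj]; split.
  apply/negP => /eqP v0; move: Hk; by rewrite v0 mxE ltxx.
move=> k' Hk' Hj'.
case: (ltngtP k' k) => c.
- by move: Hk'; rewrite Hj // eqxx.
- by move: Hk; rewrite Hj' // ltxx.
- by rewrite (val_inj c).
Qed.

Lemma lexpos_add u v : lexpos u -> lexpos v -> lexpos (u + v).
Proof.
move=> /lexposP [k1 [H1 Z1]] /lexposP [k2 [H2 Z2]]; apply/lexposP.
case: (ltngtP k1 k2) => c.
- exists k1; split; first by rewrite mxE Z2 // addr0.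
  by move=> j jk; rewrite mxE Z1 // Z2 ?addr0 // (ltn_trans jk c).
- exists k2; split; first by rewrite mxE Z1 // add0r.
  by move=> j jk; rewrite mxE Z1 ?Z2 ?addr0 // (ltn_trans jk c).
- have e : k1 = k2 by apply: val_inj.
  subst k2; exists k1; split; first by rewrite mxE addr_gt0.
  by move=> j jk; rewrite mxE Z1 ?Z2 ?addr0.
Qed.

Lemma lexpos_scale c v : 0 < c -> lexpos v -> lexpos (c *: v).
Proof.
move=> c0 /lexposP [k [H Z]]; apply/lexposP; exists k; split.
  by rewrite mxE mulr_gt0.
by move=> j jk; rewrite mxE Z ?mulr0.
Qed.

Lemma lex_trich v : v = 0 \/ lexpos v \/ lexpos (- v).
Proof.
case: (boolP (v == 0)) => [/eqP ->|vn]; first by left.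
right; have [k [Hk Z]] := first_nz vn.
case: (ltrgtP (v k ord0) 0) => c.
- right; apply/lexposP; exists k; split; first by rewrite mxE oppr_gt0.
  by move=> j jk; rewrite mxE Z ?oppr0.
- by left; apply/lexposP; exists k.
- by move: Hk; rewrite c eqxx.
Qed.

Lemma lexge_refl v : lexge v v.
Proof. by left. Qed.

Lemma lexge_trans u v w : lexge u v -> lexge v w -> lexge u w.
Proof.
case=> [e1|H1]; case=> [e2|H2].
- by left; rewrite e1 e2.
- by right; rewrite e1.
- by right; rewrite -e2.
right; have -> : u - w = (u - v) + (v - w) by rewrite addrA subrK.
exact: lexpos_add.
Qed.

Lemma lexge_total u v : lexge u v \/ lexge v u.
Proof.
case: (lex_trich (u - v)) => [/eqP|[H|H]].
- by rewrite subr_eq0 => /eqP ->; left; left.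
- by left; right.
- by right; right; rewrite opprB in H.
Qed.

Definition pv v (e : R) := \sum_(l < m) v l ord0 * e ^+ l.

Lemma pvN v e : pv (- v) e = - pv v e.
Proof. by rewrite /pv -sumrN; apply: eq_bigr => l _; rewrite mxE mulNr. Qed.

Lemma pv0 e : pv 0 e = 0.
Proof. by rewrite /pv big1 // => l _; rewrite mxE mul0r. Qed.

Lemma pv_pos v : lexpos v ->
  exists dl, 0 < dl /\ forall e, 0 < e -> e < dl -> 0 < pv v e.
Proof.
move=> /lexposP [k [Hk Z]].
pose S := \sum_(l < m) `|v l ord0|.
have S0 : 0 <= S by apply: sumr_ge0 => l _.
have S1 : 0 < S + 1 by rewrite ltr_wpDl.
exists (Num.min 1 (v k ord0 / (S + 1))); split.
  by rewrite lt_min ltr01 divr_gt0.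
move=> e e0; rewrite lt_min => /andP[e1 ekS].
have e1' : e <= 1 by apply: ltW.
have eS : e * S < v k ord0.
  apply: le_lt_trans (_ : e * (S + 1) < _).
    by apply: ler_wpM2l; [exact: ltW | rewrite lerDl].
  by rewrite -ltr_pdivlMr.
rewrite /pv (bigD1 k) //=.
have Hb : \sum_(l < m | l != k) - (`|v l ord0| * e ^+ k.+1)
          <= \sum_(l < m | l != k) v l ord0 * e ^+ l.
  apply: ler_sum => l lk.
  case: (ltngtP l k) => c.
  - rewrite Z // mul0r oppr_le0; apply: mulr_ge0 => //.
    by rewrite exprn_ge0 // ltW.
  - apply: le_trans (_ : - (`|v l ord0| * e ^+ l) <= _).
      rewrite lerN2; apply: ler_wpM2l => //; apply: ler_wiXn2l => //; exact: ltW.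
    rewrite -mulNr; apply: ler_wpM2r; first by rewrite exprn_ge0 // ltW.
    exact: (lerNnormlW (lexx _)).
  - by move: lk; rewrite (val_inj c) eqxx.
have HS : \sum_(l < m | l != k) `|v l ord0| <= S.
  by rewrite /S [X in _ <= X](bigD1 k) //= lerDr.
have H1 : 0 < v k ord0 * e ^+ k - S * e ^+ k.+1.
  rewrite exprS mulrA -mulrBl mulr_gt0 ?exprn_gt0 //.
  by rewrite subr_gt0 [S * e]mulrC.
apply: lt_le_trans H1 _.
rewrite lerD2l; apply: le_trans Hb.
rewrite sumrN lerN2 -mulr_suml; apply: ler_wpM2r => //.
by rewrite exprn_ge0 // ltW.
Qed.

End Lex.

Lemma seq_min (T : eqType) (le : T -> T -> Prop) (s : seq T) :
  (forall x y z, le x y -> le y z -> le x z) -> (forall x y, le x y \/ le y x) ->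
  s != [::] -> exists x, x \in s /\ forall y, y \in s -> le x y.
Proof.
move=> Htr Hto; elim: s => [//|x s IH] _.
case: (eqVneq s [::]) => [->|sn].
  exists x; split; first by rewrite inE eqxx.
  by move=> y; rewrite inE => /eqP ->; case: (Hto x x).
have [m [ms Hm]] := IH sn.
case: (Hto x m) => H.
  exists x; split; first by rewrite inE eqxx.
  move=> y; rewrite inE => /orP[/eqP ->|ys]; last by apply: Htr H (Hm _ ys).
  by case: (Hto x x).
exists m; split; first by rewrite inE ms orbT.
by move=> y; rewrite inE => /orP[/eqP ->|ys]; [|apply: Hm].
Qed.

Section Vertex.
Variables (R : realFieldType) (N : nat) (I J : finType).
Variables (a : I -> 'cV[R]_N) (b : I -> R) (c : J -> 'cV[R]_N) (e : J -> R).

Definition dot (u y : 'cV[R]_N) := \sum_j u j ord0 * y j ord0.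

Lemma dotD u y z : dot u (y + z) = dot u y + dot u z.
Proof. by rewrite /dot -big_split; apply: eq_bigr => j _; rewrite mxE mulrDr. Qed.

Lemma dotZ u lam y : dot u (lam *: y) = lam * dot u y.
Proof. by rewrite /dot mulr_sumr; apply: eq_bigr => j _; rewrite mxE mulrCA. Qed.

Lemma dotN u y : dot u (- y) = - dot u y.
Proof. by rewrite /dot -sumrN; apply: eq_bigr => j _; rewrite mxE mulrN. Qed.

Definition feas y := (forall k, dot (a k) y <= b k) /\ (forall k, dot (c k) y = e k).
Definition act y : {set I} := [set k | dot (a k) y == b k].
Definition basic y := feas y /\ forall r, (forall k, k \in act y -> dot (a k) r = 0) ->
   (forall k, dot (c k) r = 0) -> r = 0.

Hypothesis rec : forall r, (forall k, dot (a k) r <= 0) -> (forall k, dot (c k) r = 0) -> r = 0.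

Section Le.
Variable le : 'cV[R]_N -> 'cV[R]_N -> Prop.
Hypothesis Htr : forall x y z, le x y -> le y z -> le x z.
Hypothesis Hdir : forall y r, exists r', (r' = r \/ r' = - r) /\
   forall lam, 0 <= lam -> le (y + lam *: r') y.

Lemma vstep y : ~ basic y -> feas y ->
  exists y', feas y' /\ act y \proper act y' /\ le y' y.
Proof.
move=> nb Hf.
have [r [Hr1 [Hr2 rn]]] : exists r, (forall k, k \in act y -> dot (a k) r = 0) /\
   (forall k, dot (c k) r = 0) /\ r <> 0.
  apply: NNPP => H; apply: nb; split=> // r H1 H2.
  apply: NNPP => H3; apply: H; by exists r.
have [r' [Hr' Hle]] := Hdir y r.
have Hr'1 k : k \in act y -> dot (a k) r' = 0.
  by move=> kk; case: Hr' => ->; rewrite ?dotN Hr1 ?oppr0.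
have Hr'2 k : dot (c k) r' = 0.
  by case: Hr' => ->; rewrite ?dotN Hr2 ?oppr0.
have r'n : r' <> 0.
  by case: Hr' => -> // /eqP; rewrite oppr_eq0 => /eqP.
have Hex : exists k, 0 < dot (a k) r'.
  apply: NNPP => H; apply: r'n; apply: rec => // k.
  rewrite leNgt; apply/negP => H'; apply: H; by exists k.
have [ks [Pks Hmin]] := fin_argmin (fun k => (b k - dot (a k) y) / dot (a k) r') Hex.
set lam := (b ks - dot (a ks) y) / dot (a ks) r' in Hmin.
have lam0 : 0 <= lam.
  by apply: divr_ge0; [rewrite subr_ge0; case: Hf | exact: ltW].
exists (y + lam *: r'); split; last split; last exact: Hle.
- split=> k; rewrite dotD dotZ; last by rewrite Hr'2 mulr0 addr0; case: Hf => _ ->.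
  case: (lerP (dot (a k) r') 0) => H.
    apply: le_trans (_ : dot (a k) y + 0 <= _); last by rewrite addr0; case: Hf.
    by rewrite lerD2l mulr_ge0_le0.
  by rewrite -lerBrDl -ler_pdivlMr //; apply: Hmin.
- apply/properP; split.
    apply/subsetP => k kk; rewrite inE dotD dotZ Hr'1 // mulr0 addr0.
    by move: kk; rewrite inE.
  exists ks.
    by rewrite inE dotD dotZ /lam divfK ?subrKC // gt_eqF.
  by apply/negP => /Hr'1; move: Pks => /[swap] ->; rewrite ltxx.
Qed.

Lemma vertex y : feas y -> exists y', basic y' /\ le y' y.
Proof.
suff H : forall k y, (#|~: act y| <= k)%N -> feas y -> exists y', basic y' /\ le y' y.
  by apply: (H _ y (leqnn _)).
elim=> [|k IH] z Hk Hf.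
  case: (classic (basic z)) => bz.
    exists z; split=> //; have [r' [_ H]] := Hdir z 0.
    by have := H 0 (lexx 0); rewrite scale0r addr0.
  have [y' [_ [Hp _]]] := vstep bz Hf.
  move: Hk; rewrite -properC in Hp; have := proper_card Hp.
  by rewrite leqn0 => /[swap] /eqP ->.
case: (classic (basic z)) => bz.
  exists z; split=> //; have [r' [_ H]] := Hdir z 0.
  by have := H 0 (lexx 0); rewrite scale0r addr0.
have [y' [Hf' [Hp Hl]]] := vstep bz Hf.
have : (#|~: act y'| <= k)%N.
  rewrite -properC in Hp; have H := proper_card Hp.
  by have := leq_trans H Hk; rewrite ltnS.
move/IH => /(_ Hf') [y'' [H1 H2]]; exists y''; split=> //; exact: Htr H2 Hl.
Qed.
End Le.

Lemma basic_uniq y y' : basic y -> basic y' -> act y = act y' -> y = y'.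
Proof.
move=> [[Hf1 Hf2] H] [[Hf1' Hf2'] _] Ha.
apply/eqP; rewrite -subr_eq0; apply/eqP; apply: H.
  move=> k kk; have kk' : k \in act y' by rewrite -Ha.
  move: kk kk'; rewrite !inE => /eqP e1 /eqP e2.
  by rewrite dotD dotN e1 e2 subrr.
by move=> k; rewrite dotD dotN Hf2 Hf2' subrr.
Qed.

Lemma basic_fin : exists s : seq 'cV[R]_N, (forall y, basic y -> y \in s) /\
   (forall y, y \in s -> basic y).
Proof.
suff H : forall ss : seq {set I}, exists s : seq 'cV[R]_N,
    (forall y, basic y -> act y \in ss -> y \in s) /\ (forall y, y \in s -> basic y).
  have [s [Hs Hs']] := H (enum {set I}); exists s; split=> // y By; apply: Hs => //.
  by rewrite mem_enum.
elim=> [|X ss [s [Hs Hs']]]; first by exists [::].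
case: (classic (exists y, basic y /\ act y = X)) => [[y0 [B0 A0]]|Hn].
  exists (y0 :: s); split.
    move=> y By; rewrite inE => /orP[/eqP AX|ys].
      by rewrite (basic_uniq By B0 (etrans AX (esym A0))) inE eqxx.
    by rewrite inE Hs ?orbT.
  by move=> y; rewrite inE => /orP[/eqP ->|/Hs'].
exists s; split=> // y By; rewrite inE => /orP[/eqP AX|ys]; last exact: Hs.
by exfalso; apply: Hn; exists y.
Qed.

End Vertex.

Section Main.
Variables (R : realFieldType) (n d : nat) (beta : 'M[R]_n) (Q : 'M[R]_(n, d))
  (q : 'cV[R]_n) (i : 'I_n).

Definition gv (e : R) : 'cV[R]_n := beta *m (q + epsvec n e).

Lemma mul_entry m p (A : 'M[R]_(m, p)) (B : 'cV[R]_p) k :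
  (A *m B) k ord0 = (row k A *m B) ord0 ord0.
Proof. by rewrite -row_mul [RHS]mxE. Qed.

Lemma weak_dual e y t : Fset beta Q i y -> tfeas beta Q q i e t ->
  t <= dot (gv e) y.
Proof.
move=> [FQ [F1 F2]] [th [H1 H2]].
pose w p := (row p beta *m Q *m th) ord0 ord0.
pose g p := (row p beta *m (q + epsvec n e)) ord0 ord0.
have Eg : dot (gv e) y = \sum_p y p ord0 * g p.
  by apply: eq_bigr => p _; rewrite mulrC /gv mul_entry.
have Ew : \sum_p y p ord0 * w p = 0.
  have : (y^T *m (beta *m Q *m th)) ord0 ord0 = 0.
    have -> : y^T *m (beta *m Q *m th) = (Q^T *m beta^T *m y)^T *m th.
      by rewrite !trmx_mul !trmxK !mulmxA.
    by rewrite FQ trmx0 mul0mx mxE.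
  move=> H; rewrite -[RHS]H mxE; apply: eq_bigr => p _.
  by rewrite [y^T _ _]mxE /w [in RHS]mul_entry row_mul.
have -> : dot (gv e) y = \sum_p y p ord0 * (g p + w p).
  by rewrite Eg; under [RHS]eq_bigr do rewrite mulrDr; rewrite big_split /= Ew addr0.
rewrite (bigD1 i) //=.
have -> : g i + w i = 0 by rewrite /g -H2 addrC subrr.
rewrite mulr0 add0r -[t]mulr1 -F1 mulr_sumr; apply: ler_sum => p pi.
rewrite mulrC; apply: ler_wpM2l; first exact: F2.
by rewrite -lerBlDr addrC /g /w; apply: H1.
Qed.


Definition Cm : 'M[R]_(1 + n, n) := (beta *m row_mx q 1%:M)^T.

Lemma ehatE e : \col_(l < 1 + n) e ^+ l = col_mx (1%:M : 'M[R]_1) (epsvec n e).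
Proof.
apply/matrixP => l j; rewrite !mxE ord1; case: splitP => k Hk.
  by rewrite ord1 in Hk *; rewrite Hk !mxE eqxx.
by rewrite Hk mxE.
Qed.

Lemma pv_C e y : pv (Cm *m y) e = dot (gv e) y.
Proof.
have -> : pv (Cm *m y) e = ((Cm *m y)^T *m \col_(l < 1 + n) e ^+ l) ord0 ord0.
  by rewrite /pv [RHS]mxE; apply: eq_bigr => l _; rewrite !mxE.
rewrite ehatE /Cm trmx_mul trmxK -!mulmxA mul_row_col mulmx1 mul1mx -/(gv e).
rewrite mxE /dot; apply: eq_bigr => p _; by rewrite mxE mulrC.
Qed.

Definition aF (j : 'I_n) : 'cV[R]_n := if j != i then - \col_p (p == j)%:R else 0.
Definition bF (j : 'I_n) : R := 0.
Definition cF (k : option 'I_d) : 'cV[R]_n :=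
  match k with Some l => \col_p (Q^T *m beta^T) l p | None => \col_p (p != i)%:R end.
Definition eF (k : option 'I_d) : R := if k is None then 1 else 0.

Lemma dotNl (u y : 'cV[R]_n) : dot (- u) y = - dot u y.
Proof. by rewrite /dot -sumrN; apply: eq_bigr => j _; rewrite mxE mulNr. Qed.

Lemma dot0l (y : 'cV[R]_n) : dot 0 y = 0.
Proof. by rewrite /dot big1 // => j _; rewrite mxE mul0r. Qed.

Lemma dot_aF j y : dot (aF j) y = if j != i then - y j ord0 else 0.
Proof.
rewrite /aF; case: ifP => _; last exact: dot0l.
rewrite dotNl /dot (bigD1 j) //= mxE eqxx mul1r big1 ?addr0 // => p /negbTE pj.
by rewrite mxE pj mul0r.
Qed.

Lemma dot_cF_some l y : dot (cF (Some l)) y = (Q^T *m beta^T *m y) l ord0.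
Proof. by rewrite /dot [RHS]mxE; apply: eq_bigr => p _; rewrite mxE. Qed.

Lemma dot_cF_none y : dot (cF None) y = \sum_(p | p != i) y p ord0.
Proof.
rewrite /dot [RHS]big_mkcond; apply: eq_bigr => p _ /=; rewrite mxE.
by case: (p != i); rewrite ?mul1r ?mul0r.
Qed.

Lemma Fset_feas y : Fset beta Q i y <-> feas aF bF cF eF y.
Proof.
split.
  move=> [FQ [F1 F2]]; split=> [j|[l|]].
  - rewrite dot_aF /bF; case: ifP => ji //; rewrite oppr_le0; exact: F2 ji.
  - by rewrite dot_cF_some FQ mxE.
  - by rewrite dot_cF_none.
move=> [Ha Hc]; split; last split.
- apply/matrixP => l j; rewrite ord1 [RHS]mxE -dot_cF_some; exact: (Hc (Some l)).
- by rewrite -dot_cF_none (Hc None).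
- by move=> j ji; have := Ha j; rewrite dot_aF ji oppr_le0.
Qed.

Lemma recF : row i beta *m Q != 0 -> forall r, (forall j, dot (aF j) r <= 0) ->
  (forall k, dot (cF k) r = 0) -> r = 0.
Proof.
move=> hQ r Ha Hc.
have Hnn p : p != i -> 0 <= r p ord0.
  by move=> pi; have := Ha p; rewrite dot_aF pi oppr_le0.
have Hz p : p != i -> r p ord0 = 0.
  have Hs : \sum_(p | p != i) r p ord0 = 0 by rewrite -dot_cF_none (Hc None).
  by move=> pi; exact: (psumr_eq0P Hnn Hs pi).
have [l hl] : exists l, (row i beta *m Q) ord0 l != 0.
  apply: NNPP => H; move/negP: hQ; apply; apply/eqP/matrixP => a l.
  rewrite ord1 [RHS]mxE; apply: NNPP => H'; apply: H; exists l; exact/eqP.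
have E : (Q^T *m beta^T *m r) l ord0 = (beta *m Q) i l * r i ord0.
  rewrite mxE (bigD1 i) //= big1 ?addr0.
    by rewrite -trmx_mul mxE.
  by move=> p pi; rewrite Hz // mulr0.
have ri : r i ord0 = 0.
  move: (Hc (Some l)); rewrite dot_cF_some E => /eqP; rewrite mulf_eq0.
  case/orP=> [H|/eqP //]; move: hl; by rewrite -row_mul mxE H.
apply/matrixP => p j; rewrite ord1 [RHS]mxE.
by case: (eqVneq p i) => [->|pi]; [exact: ri | exact: Hz].
Qed.

Lemma nz_entry : row i beta *m Q != 0 -> exists l, (beta *m Q) i l != 0.
Proof.
move=> hQ; apply: NNPP => H; move/negP: hQ; apply; apply/eqP/matrixP => a l.
rewrite ord1 [RHS]mxE -row_mul mxE; apply: NNPP => H'; apply: H; exists l; exact/eqP.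
Qed.

Definition ext (f : 'I_d -> R) (l : nat) : R := if insub l is Some o then f o else 0.
Lemma ext_ord f (o : 'I_d) : ext f o = f o.
Proof. by rewrite /ext valK. Qed.

Definition coef (f : 'I_n -> R) (k : ('I_n + bool)%type) : R :=
  match k with inl p => if p != i then f p else 0 | inr true => f i | inr false => - f i end.
Definition ind (k : ('I_n + bool)%type) : R :=
  match k with inl p => (p != i)%:R | inr _ => 0 end.
Definition Yv (lam : ('I_n + bool)%type -> R) (p : 'I_n) : R :=
  if p != i then lam (inl p) else lam (inr true) - lam (inr false).

Lemma coef_sum lam f : \sum_k lam k * coef f k = \sum_p Yv lam p * f p.
Proof.
rewrite big_sumType big_bool /= [RHS](bigD1 i) //= [X in X + _ = _](bigD1 i) //=.
rewrite eqxx mulr0 add0r /Yv eqxx /= mulrN mulrBl [RHS]addrC; congr (_ + _).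
by apply: eq_bigr => p pi; rewrite pi.
Qed.

Lemma ind_sum lam : \sum_k lam k * ind k = \sum_(p | p != i) lam (inl p).
Proof.
rewrite big_sumType big_bool /= !mulr0 !addr0 [RHS]big_mkcond.
by apply: eq_bigr => p _; case: (p != i); rewrite ?mulr1 ?mulr0.
Qed.

Lemma primal_max e ystar : row i beta *m Q != 0 -> Fset beta Q i ystar ->
  (forall y, Fset beta Q i y -> dot (gv e) ystar <= dot (gv e) y) ->
  tfeas beta Q q i e (dot (gv e) ystar).
Proof.
move=> hQ Fy Hmin.
set m := dot (gv e) ystar.
pose BQ := beta *m Q.
pose af (k : ('I_n + bool)%type) (l : nat) := coef (fun p => ext (fun o => - BQ p o) l) k.
pose bf k := coef (fun p => gv e p ord0) k - m * ind k.
have Eg p : gv e p ord0 = (row p beta *m (q + epsvec n e)) ord0 ord0.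
  exact: mul_entry.
case: (classic (exists x, feasF d af bf x)) => [[x Hx]|Hn].
  pose th := \col_(l < d) x l.
  have Ew p : (row p beta *m Q *m th) ord0 ord0 = \sum_(l < d) BQ p l * x l.
    rewrite -row_mul mxE; apply: eq_bigr => l _; by rewrite !mxE.
  have Ea p : \sum_(l < d) af (inl p) l * x l =
              if p != i then - (row p beta *m Q *m th) ord0 ord0 else 0.
    rewrite /af /=; case: ifP => _; last by rewrite big1 // => l _; rewrite mul0r.
    rewrite Ew -sumrN; apply: eq_bigr => l _; by rewrite ext_ord mulNr.
  have Eb b0 : \sum_(l < d) af (inr b0) l * x l =
       (if b0 then -1 else 1) * (row i beta *m Q *m th) ord0 ord0.
    rewrite Ew mulr_sumr; apply: eq_bigr => l _.
    by case: b0; rewrite /af /= ext_ord ?opprK ?mulN1r ?mul1r ?mulNr.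
  exists th; split.
    move=> j ji; have := Hx (inl j); rewrite Ea ji /bf /= ji mulr1 -Eg.
    by rewrite lerBrDr.
  apply: le_anti; apply/andP; split.
    by have := Hx (inr true); rewrite Eb /bf /= mulr0 subr0 -Eg mulN1r.
  have := Hx (inr false); rewrite Eb /bf /= mulr0 subr0 -Eg mul1r.
  by rewrite lerNr.
have [lam [lam0 [lamA lamB]]] := farkas Hn.
pose Y : 'cV[R]_n := \col_p Yv lam p.
have HY0 l : \sum_p Yv lam p * BQ p l = 0.
  have := lamA l (ltn_ord l); rewrite /af coef_sum => H.
  apply/eqP; rewrite -oppr_eq0 -sumrN; apply/eqP; rewrite -[RHS]H; apply: eq_bigr => p _.
  by rewrite ext_ord mulrN.
have HQY : Q^T *m beta^T *m Y = 0.
  apply/matrixP => l j; rewrite ord1 [RHS]mxE mxE; rewrite -[RHS](HY0 l).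
  apply: eq_bigr => p _; rewrite -trmx_mul !mxE mulrC //.
pose s := \sum_(p | p != i) lam (inl p).
have HB : \sum_k lam k * bf k = \sum_p Yv lam p * gv e p ord0 - m * s.
  rewrite /bf; under eq_bigr do rewrite mulrBr.
  rewrite sumrB coef_sum; congr (_ - _).
  rewrite /s -ind_sum mulr_sumr; apply: eq_bigr => k _; by rewrite mulrCA.
have s0 : 0 <= s by apply: sumr_ge0 => p _; apply: lam0.
case: (ltrgtP s 0) => [|sp|s00]; first by rewrite ltNge s0.
  pose y' := s^-1 *: Y.
  have Fy' : Fset beta Q i y'.
    split; last split.
    - by rewrite /y' -scalemxAr HQY scaler0.
    - rewrite -[RHS](mulVf (lt0r_neq0 sp)) mulr_sumr; apply: eq_bigr => p pi.
      by rewrite !mxE /Yv pi.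
    - by move=> p pi; rewrite !mxE /Yv pi mulr_ge0 // invr_ge0 ltW.
  have := Hmin _ Fy'; rewrite /y' dotZ.
  have -> : dot (gv e) Y = \sum_p Yv lam p * gv e p ord0.
    by apply: eq_bigr => p _; rewrite [Y _ _]mxE mulrC.
  move: lamB; rewrite HB subr_lt0 => H1.
  rewrite mulrC ler_pdivlMr // => H2.
  by have := lt_le_trans H1 H2; rewrite ltxx.
have Hz p : p != i -> lam (inl p) = 0.
  move=> pi; exact: (@psumr_eq0P _ _ (fun p => p != i) (fun p => lam (inl p))
     (fun p _ => lam0 (inl p)) s00 p pi).
have [l hl] := nz_entry hQ.
have Yi : Yv lam i = 0.
  have := HY0 l; rewrite (bigD1 i) //= big1 ?addr0.
    by move/eqP; rewrite mulf_eq0 (negbTE hl) orbF => /eqP.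
  by move=> p pi; rewrite /Yv pi Hz // mul0r.
move: lamB; rewrite HB s00 mulr0 subr0 big1 ?ltxx // => p _.
case: (eqVneq p i) => [->|pi]; first by rewrite Yi mul0r.
by rewrite /Yv pi Hz // mul0r.
Qed.

End Main.

End Aux.
Import Aux.

Lemma delta_seq (R : realFieldType) (T : eqType) (P : T -> R -> Prop) (s : seq T) :
  (forall y, y \in s -> exists dl : R, 0 < dl /\ forall e, 0 < e -> e < dl -> P y e) ->
  exists dl : R, 0 < dl /\ forall y, y \in s -> forall e, 0 < e -> e < dl -> P y e.
Proof.
elim: s => [|x s IH] H; first by exists 1; split.
have [dl1 [d10 H1]] : exists dl : R, 0 < dl /\ forall y, y \in s ->
    forall e, 0 < e -> e < dl -> P y e.
  by apply: IH => y ys; apply: H; rewrite inE ys orbT.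
have [dl2 [d20 H2]] := H x (mem_head _ _).
exists (Num.min dl1 dl2); split; first by rewrite lt_min d10 d20.
move=> y; rewrite inE => /orP[/eqP ->|ys] e e0; rewrite lt_min => /andP[e1 e2].
  exact: H2.
exact: H1.
Qed.

Theorem mainTheorem12 (R : realFieldType) (n d : nat) (M : 'M[R]_n)
  (b : 'I_n -> 'I_(n + n)) (i : 'I_n) (Q : 'M[R]_(n, d)) (q : 'cV[R]_n) :
  compl_basis M b ->
  (exists y, Fset (betaB M b) Q i y) ->
  row i (betaB M b) *m Q != 0 ->
  exists Tstar : 'cV[R]_(1 + n),
    is_lexmin (Tset (betaB M b) Q q i) Tstar /\
    ((exists delta : R, 0 < delta /\
        forall e : R, 0 < e -> e < delta ->
          exists tstar, is_max (tfeas (betaB M b) Q q i e) tstar /\ 0 < tstar)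
     <-> lexpos Tstar).
Proof.
move=> _ [y0 Fy0] hQ.
set beta := betaB M b.
have rec := recF hQ.
have [s [Hs Hs']] := basic_fin (aF R i) (@bF R n) (cF beta Q i) (@eF R d).
have HF y := Fset_feas beta Q i y.
pose C := Cm beta q.
pose leL (x y : 'cV[R]_n) := lexge (C *m y) (C *m x).
have trL : forall x y z, leL x y -> leL y z -> leL x z.
  by move=> x y z H1 H2; exact: lexge_trans H2 H1.
have totL : forall x y, leL x y \/ leL y x.
  by move=> x y; case: (lexge_total (C *m y) (C *m x)); [left|right].
have dirL : forall (y r : 'cV[R]_n), exists r', (r' = r \/ r' = - r) /\
   forall lam, 0 <= lam -> leL (y + lam *: r') y.
  move=> y r; case: (lex_trich (C *m r)) => [Cr0|[Cp|Cn]].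
  - exists r; split; first by left.
    by move=> lam _; left; rewrite mulmxDr -scalemxAr Cr0 scaler0 addr0.
  - exists (- r); split; first by right.
    move=> lam; rewrite le_eqVlt => /orP[/eqP <-|lam0].
      by left; rewrite scale0r addr0.
    right; rewrite mulmxDr -scalemxAr mulmxN scalerN opprD addrA subrr add0r opprK.
    exact: lexpos_scale.
  - exists r; split; first by left.
    move=> lam; rewrite le_eqVlt => /orP[/eqP <-|lam0].
      by left; rewrite scale0r addr0.
    right; rewrite mulmxDr -scalemxAr opprD addrA subrr add0r -scalerN.
    exact: lexpos_scale.
have [y1 [B1 _]] := vertex rec trL dirL (proj1 (HF y0) Fy0).
have sn : s != [::].
  by apply/eqP => s0; move: (Hs _ B1); rewrite s0.
have [ys [ysin Hys]] := seq_min trL totL sn.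
have Fys : Fset beta Q i ys by apply/HF; case: (Hs' _ ysin).
exists (C *m ys).
have Hmin e : exists ym, ym \in s /\ Fset beta Q i ym /\
    forall y, Fset beta Q i y -> dot (gv beta q e) ym <= dot (gv beta q e) y.
  pose g := gv beta q e.
  pose leS (x y : 'cV[R]_n) := dot g x <= dot g y.
  have trS : forall x y z, leS x y -> leS y z -> leS x z.
    by move=> x y z; exact: le_trans.
  have totS : forall x y, leS x y \/ leS y x.
    by move=> x y; case: (lerP (dot g x) (dot g y)) => H; [left|right; apply: ltW].
  have dirS : forall (y r : 'cV[R]_n), exists r', (r' = r \/ r' = - r) /\
     forall lam, 0 <= lam -> leS (y + lam *: r') y.
    move=> y r; case: (lerP (dot g r) 0) => H.
      exists r; split; first by left.
      by move=> lam lam0; rewrite /leS dotD dotZ gerDl mulr_ge0_le0.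
    exists (- r); split; first by right.
    move=> lam lam0; rewrite /leS dotD dotZ dotN gerDl mulr_ge0_le0 //.
    by rewrite oppr_le0 ltW.
  have [ym [ymin Hym]] := seq_min trS totS sn.
  exists ym; split=> //; split; first by apply/HF; case: (Hs' _ ymin).
  move=> y Fy; have [y' [By' Hle]] := vertex rec trS dirS (proj1 (HF y) Fy).
  exact: le_trans (Hym _ (Hs _ By')) Hle.
have Htstar e ym : Fset beta Q i ym ->
    (forall y, Fset beta Q i y -> dot (gv beta q e) ym <= dot (gv beta q e) y) ->
    is_max (tfeas beta Q q i e) (dot (gv beta q e) ym).
  move=> Fym Hm; split; first exact: primal_max.
  move=> t Ht; exact: weak_dual Fym Ht.
split.
  split; first by exists ys.
  move=> s' [y [Fy ->]].
  have [y' [By' Hle]] := vertex rec trL dirL (proj1 (HF y) Fy).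
  exact: lexge_trans Hle (Hys _ (Hs _ By')).
split.
  move=> [dl [dl0 H]].
  have Hp e : 0 < e -> e < dl -> 0 < pv (C *m ys) e.
    move=> e0 el; have [t [[Tf _] t0]] := H e e0 el.
    rewrite pv_C; exact: lt_le_trans t0 (weak_dual Fys Tf).
  case: (lex_trich (C *m ys)) => [E0|[//|En]].
    have [h1 h2] := midf_lt dl0.
    by have := Hp _ h1 h2; rewrite E0 pv0 ltxx.
  have [dl' [dl'0 H']] := pv_pos En.
  have m0 : 0 < Num.min dl dl' by rewrite lt_min dl0 dl'0.
  have [h1 h2] := midf_lt m0.
  move: h2; rewrite lt_min => /andP[h2 h3].
  have := H' _ h1 h3; rewrite pvN oppr_gt0 => H1.
  by have := lt_trans H1 (Hp _ h1 h2); rewrite ltxx.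
move=> Tpos.
have Hb : forall y, y \in s -> exists dl : R, 0 < dl /\
    forall e, 0 < e -> e < dl -> 0 < pv (C *m y) e.
  move=> y yin; apply: pv_pos.
  case: (Hys _ yin) => [->|H]; first exact: Tpos.
  have -> : C *m y = (C *m y - C *m ys) + C *m ys by rewrite subrK.
  exact: lexpos_add.
have [dl [dl0 Hdl]] := @delta_seq R _ (fun y e => 0 < pv (C *m y) e) s Hb.
exists dl; split=> // e e0 el.
have [ym [ymin [Fym Hmym]]] := Hmin e.
exists (dot (gv beta q e) ym); split; first exact: Htstar.
rewrite -pv_C; exact: Hdl.
Qed.
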